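(* For each $i=1,\dots,d$, every $\mathbf F_i$-supermartingale is also an $\mathbf F^i$-supermartingale.
   Context: $(\Omega,\mathcal F,\mathbb P)$ is complete and $\{\mathcal F(\tilde s)\}_{\tilde s\in\mathbb N_0^d}$ satisfies (F1) $\mathcal F(\tilde s)\subseteq\mathcal F(\tilde r)$ for $\tilde s\le\tilde r$ componentwise; (F2) $\mathcal F(\tilde 0)$ contains all null sets; (F4) for all $\tilde s,\tilde r$, $\mathcal F(\tilde s)$ and $\mathcal F(\tilde r)$ are conditionally independent given $\mathcal F(\tilde s\wedge\tilde r)$ ($\wedge$ componentwise minimum). With $\tilde e_i$ the $i$th unit vector: $\mathcal F_i(t):=\mathcal F(t\tilde e_i)$, $\mathbf F_i=\{\mathcal F_i(t)\}_{t\in\mathbb N_0}$; $\mathcal F^i(t):=\sigma\big(\bigcup_{\tilde r\in\mathbb N_0^d:\,r_i\le t}\mathcal F(\tilde r)\big)$, $\mathbf F^i=\{\mathcal F^i(t)\}_{t\in\mathbb N_0}$. *)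

(* Defs.v *)
From HB Require Import structures.
From mathcomp Require Import all_boot all_order all_algebra.
From mathcomp Require Import all_classical all_reals all_analysis.
Set Implicit Arguments. Unset Strict Implicit. Unset Printing Implicit Defensive.
Import Order.TTheory GRing.Theory Num.Theory.
Local Open Scope classical_set_scope.
Local Open Scope ring_scope.

Section defs.
Context (dsp : measure_display) (T : measurableType dsp) (R : realType).

Definition sub_sigma (G : set (set T)) :=
  sigma_algebra setT G /\ G `<=` measurable.

Definition measurable_wrt (G : set (set T)) (f : T -> R) :=
  forall B : set R, measurable B -> G (f @^-1` B).

Variable P : probability T R.

Definition is_cond_exp (G : set (set T)) (X Y : T -> R) :=
  [/\ measurable_wrt G Y, P.-integrable setT (EFin \o Y) &
      forall A, G A -> (\int[P]_(x in A) (Y x)%:E = \int[P]_(x in A) (X x)%:E)%E].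

Definition cond_indep (G1 G2 H : set (set T)) :=
  forall A B, G1 A -> G2 B ->
    exists YA YB : T -> R,
      [/\ is_cond_exp H (\1_A) YA, is_cond_exp H (\1_B) YB &
          is_cond_exp H (\1_(A `&` B)) (YA \* YB)].

Definition supermartingale (G : nat -> set (set T)) (X : nat -> T -> R) :=
  [/\ forall t, measurable_wrt (G t) (X t),
      forall t, P.-integrable setT (EFin \o X t) &
      forall s t, (s <= t)%N -> forall Y, is_cond_exp (G s) (X t) Y ->
        {ae P, forall x, Y x <= X s x}].
End defs.

Definition mleq (d : nat) (s r : 'I_d -> nat) := forall i, (s i <= r i)%N.
Definition mmin (d : nat) (s r : 'I_d -> nat) : 'I_d -> nat :=
  fun i => minn (s i) (r i).
Definition unitv (d : nat) (i : 'I_d) (t : nat) : 'I_d -> nat :=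
  fun j => if j == i then t else 0%N.

(* F_i(t) = F(t e_i) *)
Definition axisF (T : Type) (d : nat) (F : ('I_d -> nat) -> set (set T))
  (i : 'I_d) : nat -> set (set T) := fun t => F (unitv i t).
(* F^i(t) = sigma( U_{r : r_i <= t} F(r) ) *)
Definition slabF (T : Type) (d : nat) (F : ('I_d -> nat) -> set (set T))
  (i : 'I_d) : nat -> set (set T) :=
  fun t => smallest (sigma_algebra setT)
             (\bigcup_(r in [set r : 'I_d -> nat | (r i <= t)%N]) F r).

(* Main.v *)
Require Import Defs.
From HB Require Import structures.
From mathcomp Require Import all_boot all_order all_algebra.
From mathcomp Require Import all_classical all_reals all_analysis.
Import Order.TTheory GRing.Theory Num.Theory.
Local Open Scope classical_set_scope.
Local Open Scope ring_scope.
From mathcomp Require Import measurable_realfun.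
From mathcomp Require Import lra ring.

Section aux.
Context {dsp : measure_display} {T : measurableType dsp} {R : realType}.

Lemma mT'E {G : set (set T)} : sub_sigma G ->
  forall A, (measurable : set (set (g_sigma_algebraType G))) A <-> G A.
Proof. by move=> [sG _] A; rewrite measurable_g_measurableTypeE. Qed.

Lemma mwrtP {G : set (set T)} (f : T -> R) : sub_sigma G ->
  measurable_wrt G f <-> measurable_fun [set: g_sigma_algebraType G] (f : g_sigma_algebraType G -> R).
Proof.
move=> sG; split.
- move=> mf _ B mB; rewrite setTI.
  apply (mT'E sG _).2; exact: mf.
- move=> mf B mB; apply/(mT'E sG); rewrite -[X in measurable X]setTI; exact: mf.
Qed.

Lemma mfun_T'T {G : set (set T)} {d' : measure_display} {Y : measurableType d'} {f : T -> Y} :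
  sub_sigma G ->
  measurable_fun [set: g_sigma_algebraType G] (f : g_sigma_algebraType G -> Y) ->
  measurable_fun [set: T] f.
Proof.
move=> sG mf _ B mB; have := mf measurableT B mB; rewrite !setTI => /(mT'E sG).
exact: sG.2.
Qed.

Lemma mid_TT' {G : set (set T)} : sub_sigma G ->
  measurable_fun [set: T] (id : T -> g_sigma_algebraType G).
Proof.
move=> sG _ B /(mT'E sG) GB; rewrite setTI preimage_id; exact: sG.2.
Qed.

End aux.


Section cexp.
Context {dsp : measure_display} {T : measurableType dsp} {R : realType}.
Local Open Scope ereal_scope.

Definition muG (P : probability T R) {G : set (set T)} (sG : sub_sigma G) :
  set (g_sigma_algebraType G) -> \bar R := fun A => P A.
Arguments muG P {G} sG.

Section muG_inst.
Variables (P : probability T R) (G : set (set T)) (sG : sub_sigma G).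
Let mu0 : muG P sG set0 = 0. Proof. exact: measure0. Qed.
Let mu_ge0 A : 0 <= muG P sG A. Proof. exact: measure_ge0. Qed.
Let mu_sadd : semi_sigma_additive (muG P sG).
Proof.
move=> F mF tF mUF; apply: measure_semi_sigma_additive => //.
- move=> n; apply: sG.2. exact: (mT'E sG _).1 (mF n).
- by apply: sG.2; exact: (mT'E sG _).1 mUF.
Qed.
HB.instance Definition _ := isMeasure.Build _ _ _ (muG P sG) mu0 mu_ge0 mu_sadd.
Let muT : muG P sG setT = 1. Proof. exact: probability_setT. Qed.
HB.instance Definition _ := Measure_isProbability.Build _ _ _ (muG P sG) muT.
End muG_inst.

Definition nuG (P : probability T R) {G : set (set T)} (sG : sub_sigma G)
  (X : T -> \bar R) (intX : P.-integrable setT X) :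
  set (g_sigma_algebraType G) -> \bar R := fun A => \int[P]_(x in A) X x.
Arguments nuG {P G} sG {X} intX.

Section nuG_inst.
Variables (P : probability T R) (G : set (set T)) (sG : sub_sigma G).
Variables (X : T -> \bar R) (intX : P.-integrable setT X).
Let nu0 : nuG sG intX set0 = 0. Proof. exact: (charge0 (induced_charge intX)). Qed.
Let nu_fin A : measurable A -> nuG sG intX A \is a fin_num.
Proof.
move=> mA; apply: (fin_num_measure (induced_charge intX)).
by apply: sG.2; exact: (mT'E sG _).1 mA.
Qed.
Let nu_sadd : semi_sigma_additive (nuG sG intX).
Proof.
move=> F mF tF mUF.
have mF' : forall n, measurable (F n : set T).
  by move=> n; apply: sG.2; exact: (mT'E sG _).1 (mF n).
have mUF' : measurable (\bigcup_n F n : set T).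
  by apply: sG.2; exact: (mT'E sG _).1 mUF.
exact: (@charge_semi_sigma_additive _ _ _ (induced_charge intX) F mF' tF mUF').
Qed.
HB.instance Definition _ := isCharge.Build _ _ _ (nuG sG intX) nu0 nu_fin nu_sadd.
End nuG_inst.


Lemma int_muG (P : probability T R) {G : set (set T)} (sG : sub_sigma G) (D : set (g_sigma_algebraType G))
  (g : g_sigma_algebraType G -> \bar R) :
  measurable D -> measurable_fun [set: g_sigma_algebraType G] g -> P.-integrable (D : set T) g ->
  \int[muG P sG]_(x in D) g x = \int[P]_(x in (D : set T)) g x.
Proof.
move=> mD mg ig.
have h := (@integral_pushforward _ _ T (g_sigma_algebraType G) R id (mid_TT' sG) P D g mg ig mD).
rewrite preimage_id in h; exact: h.
Qed.

Lemma ge0_int_muG (P : probability T R) {G : set (set T)} (sG : sub_sigma G) (D : set (g_sigma_algebraType G))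
  (g : g_sigma_algebraType G -> \bar R) :
  measurable D -> measurable_fun D g -> (forall x, 0 <= g x) ->
  \int[muG P sG]_(x in D) g x = \int[P]_(x in (D : set T)) g x.
Proof.
move=> mD mg g0.
have h := (@ge0_integral_pushforward _ _ T (g_sigma_algebraType G) R id (mid_TT' sG) P D g mD mg (fun y _ => g0 y)).
rewrite preimage_id in h; exact: h.
Qed.

Lemma cond_exp_exists (P : probability T R) {G : set (set T)} (sG : sub_sigma G) (X : T -> R) :
  P.-integrable setT (EFin \o X) -> exists Z, is_cond_exp P G X Z.
Proof.
move=> intX.
pose mu := muG P sG. pose nu := nuG sG intX.
have numu : nu `<< mu.
  apply/null_content_dominatesP => A mA muA0; rewrite /nu/nuG.
  have mA' : measurable (A : set T) by apply: sG.2; exact: (mT'E sG _).1 mA.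
  apply: null_set_integral => //.
  exact: measurable_funTS (measurable_int _ intX).
pose f := Radon_Nikodym nu mu.
have ffin x : f x \is a fin_num by exact: Radon_Nikodym_fin_num.
have fint : mu.-integrable setT f by exact: Radon_Nikodym_integrable.
have fE A : measurable A -> nu A = \int[mu]_(x in A) f x.
  by move=> mA; exact: Radon_Nikodym_integral.
have mf : measurable_fun setT f by exact: measurable_int fint.
have fZ : EFin \o (fun x => fine (f x)) = f.
  by apply/funext => x /=; rewrite fineK.
have mZ : measurable_fun [set: g_sigma_algebraType G] (fun x => fine (f x)).
  by apply/measurable_EFinP; rewrite fZ.
have mfT : measurable_fun [set: T] (f : T -> \bar R) by exact: mfun_T'T sG mf.
have fintT : P.-integrable setT (f : T -> \bar R).
  apply/integrableP; split => //.
  rewrite -(ge0_int_muG P sG) //; first by case/integrableP: fint.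
  exact: measurableT_comp.
exists (fun x => fine (f x)); split.
- exact/(mwrtP _ sG).
- by rewrite fZ.
- move=> A GA.
  have mA : measurable (A : set (g_sigma_algebraType G)) by exact/(mT'E sG _).
  have mA' : measurable (A : set T) by exact: sG.2.
  rewrite [X in _ = X](_ : _ = nu A) // fE // int_muG //.
  + by apply: eq_integral => x _; rewrite fineK.
  + exact: integrableS fintT.
Qed.
End cexp.


Section cmp.
Context {dsp : measure_display} {T : measurableType dsp} {R : realType}.
Local Open Scope ereal_scope.

Lemma Gset_lt {G : set (set T)} (sG : sub_sigma G) (f1 f2 : T -> R) :
  measurable_wrt G f1 -> measurable_wrt G f2 -> G [set x | (f2 x < f1 x)%R].
Proof.
move=> /(mwrtP _ sG) m1 /(mwrtP _ sG) m2.
have := @measurable_fun_ltr _ _ _ [set: g_sigma_algebraType G] _ _ m2 m1 measurableT [set true] I.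
rewrite setTI => /(mT'E sG _); congr G; apply/seteqP; split => x //=.
Qed.

Lemma cmp_ae (P : probability T R) {G : set (set T)} (sG : sub_sigma G) (f1 f2 : T -> R) :
  measurable_wrt G f1 -> measurable_wrt G f2 ->
  P.-integrable setT (EFin \o f1) -> P.-integrable setT (EFin \o f2) ->
  (forall C, G C -> \int[P]_(x in C) (f1 x)%:E <= \int[P]_(x in C) (f2 x)%:E) ->
  {ae P, forall x, (f1 x <= f2 x)%R}.
Proof.
move=> m1 m2 i1 i2 le12.
pose S := [set x | (f2 x < f1 x)%R].
have GS : G S by exact: Gset_lt.
have mS : measurable S by exact: sG.2.
have i1S : P.-integrable S (EFin \o f1) by exact: integrableS i1.
have i2S : P.-integrable S (EFin \o f2) by exact: integrableS i2.
have mh : measurable_fun S (EFin \o (fun x => f1 x - f2 x)%R).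
  apply/measurable_EFinP; apply: measurable_funB.
  - by apply/measurable_EFinP; exact: measurable_int i1S.
  - by apply/measurable_EFinP; exact: measurable_int i2S.
have : \int[P]_(x in S) `|(EFin \o (fun x => f1 x - f2 x)%R) x| = 0.
  apply/eqP; rewrite eq_le integral_ge0 ?andbT; last by move=> x _.
  rewrite (eq_integral (fun x => (f1 x)%:E - (f2 x)%:E)); last first.
    move=> x; rewrite inE /S /= => lt.
    by rewrite /= ger0_norm ?subr_ge0 ?ltW// EFinB.
  by rewrite integralB_EFin // sube_le0 le12.
move/(ae_eq_integral_abs _ mS mh) => ae0.
apply: filterS ae0 => x /= Hx; rewrite leNgt; apply/negP => lt.
have := Hx lt; move/eqP; rewrite eqe subr_eq0 => /eqP e.
by move: lt; rewrite e ltxx.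
Qed.
End cmp.


Import HBNNSimple.

Section L0.
Context {dsp : measure_display} {T : measurableType dsp} {R : realType}.
Local Open Scope ereal_scope.

Lemma sfun_int (P : probability T R) {G : set (set T)} (sG : sub_sigma G)
  (h : {nnsfun g_sigma_algebraType G >-> R}) (D : T -> R) :
  (forall x, (0 <= D x)%R) -> measurable_fun setT D ->
  \int[P]_x ((h x)%:E * (D x)%:E) =
  \sum_(y \in range h) (y%:E * \int[P]_(x in (h @^-1` [set y] : set T)) (D x)%:E).
Proof.
move=> D0 mD.
have mpre y : measurable (h @^-1` [set y] : set T).
  apply: sG.2; apply/(mT'E sG _).
  by rewrite -[X in measurable X]setTI; exact: measurable_funP.
have t0 y x : (0 <= (y * \1_(h @^-1` [set y]) x)%:E).
  rewrite lee_fin indicE; case: (boolP (x \in _)) => [|_]; last by rewrite mulr0.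
  by rewrite inE /= => <-; rewrite mulr1.
under eq_integral => x _ do rewrite fimfunE -fsumEFin // ge0_mule_fsuml //.
rewrite ge0_integral_fsum //.
apply: eq_fsbigr => y; rewrite inE => -[x0 _ hx0].
have y0 : (0 <= y)%R by rewrite -hx0; exact: fun_ge0.
under eq_integral do rewrite EFinM -muleA.
rewrite ge0_integralZl ?lee_fin //; last first.
- by move=> x _; rewrite mule_ge0 // lee_fin.
- apply: emeasurable_funM; last exact/measurable_EFinP.
  by apply/measurable_EFinP; exact: measurable_indic.
- congr (_ * _).
  rewrite [RHS]integral_mkcond; apply: eq_integral => x _.
  by rewrite epatch_indic /= muleC.
- move=> n; apply: emeasurable_funM; last exact/measurable_EFinP.
  apply/measurable_EFinP; apply: measurable_funM => //.
- by move=> y x _; rewrite mule_ge0 // lee_fin.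
Qed.

Lemma L0 (P : probability T R) {G : set (set T)} (sG : sub_sigma G) (D1 D2 : T -> R)
  (g : T -> \bar R) :
  (forall x, 0 <= D1 x)%R -> (forall x, 0 <= D2 x)%R ->
  measurable_fun setT D1 -> measurable_fun setT D2 ->
  (forall C, G C -> \int[P]_(x in C) (D1 x)%:E = \int[P]_(x in C) (D2 x)%:E) ->
  measurable_fun [set: g_sigma_algebraType G] (g : g_sigma_algebraType G -> \bar R) ->
  (forall x, 0 <= g x) ->
  \int[P]_x (g x * (D1 x)%:E) = \int[P]_x (g x * (D2 x)%:E).
Proof.
move=> D10 D20 mD1 mD2 HD mg g0.
pose h := nnsfun_approx (@measurableT _ (g_sigma_algebraType G)) mg.
have key (D : T -> R) : (forall x, 0 <= D x)%R -> measurable_fun setT D ->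
   \int[P]_x (g x * (D x)%:E) = limn (fun n => \int[P]_x ((h n x)%:E * (D x)%:E)).
  move=> D0 mD.
  rewrite -monotone_convergence //.
  - apply: eq_integral => x _; apply/esym/cvg_lim => //; apply: cvgeZr => //.
    exact: cvg_nnsfun_approx.
  - move=> n; apply: emeasurable_funM; last exact/measurable_EFinP.
    apply/measurable_EFinP; apply: (mfun_T'T sG); exact: measurable_funP.
  - by move=> n x _; rewrite mule_ge0 // lee_fin //; exact: fun_ge0.
  - move=> x _ a b ab; rewrite lee_wpmul2r ?lee_fin //.
    by move: x; apply/lefP; exact: (@nd_nnsfun_approx _ _ _ _ measurableT _ mg _ _ ab).
rewrite !key //; congr (limn _); apply/funext => n; rewrite !(sfun_int P sG) //.
apply: eq_fsbigr => y _; congr (_ * _); apply: HD; apply/(mT'E sG _).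
rewrite -[X in measurable X]setTI; exact: measurable_funP.
Qed.
End L0.


Section L1.
Context {dsp : measure_display} {T : measurableType dsp} {R : realType}.

Lemma EFinRint (P : probability T R) (D : set T) (u : T -> R) :
  measurable D -> P.-integrable D (EFin \o u) ->
  (\int[P]_(x in D) (u x)%:E = (\int[P]_(x in D) u x)%:E)%E.
Proof. by move=> mD iu; rewrite /Rintegral fineK // integrable_fin_num. Qed.

Lemma int_dom (P : probability T R) (u v w : T -> R) :
  measurable_fun setT u ->
  P.-integrable setT (EFin \o v) -> P.-integrable setT (EFin \o w) ->
  (forall x, `|u x| <= `|v x| + `|w x|) -> P.-integrable setT (EFin \o u).
Proof.
move=> mu iv iw H.
apply: (@le_integrable _ _ _ P setT measurableT (EFin \o u) (EFin \o (fun x => `|v x| + `|w x|))) => //.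
- exact/measurable_EFinP.
- move=> x _ /=; rewrite lee_fin (le_trans (H x)) //.
  by rewrite (ger0_norm (addr_ge0 (normr_ge0 _) (normr_ge0 _))).
- rewrite (_ : EFin \o _ = (fun x => `|(v x)%:E| + `|(w x)%:E|)%E); last first.
    by apply/funext => x /=.
  by apply: integrableD => //; exact: integrable_abse.
Qed.

Lemma posneg (f : T -> R) x : f^\+ x - f^\- x = f x.
Proof. by have := funrposBneg f => /(congr1 (fun h => h x)). Qed.

Lemma posabs (f : T -> R) x : f^\+ x + f^\- x = `|f x|.
Proof. by have := funrposDneg f => /(congr1 (fun h => h x)). Qed.

Lemma pos_le (f : T -> R) x : `|f^\+ x| <= `|f x|.
Proof. by rewrite ger0_norm // -posabs lerDl. Qed.

Lemma neg_le (f : T -> R) x : `|f^\- x| <= `|f x|.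
Proof. by rewrite ger0_norm ?funrneg_ge0 // -posabs lerDr. Qed.


Lemma intD (P : probability T R) (u v : T -> R) :
  P.-integrable setT (EFin \o u) -> P.-integrable setT (EFin \o v) ->
  P.-integrable setT (EFin \o (fun x => u x + v x)).
Proof.
move=> iu iv; rewrite (_ : EFin \o _ = (EFin \o u) \+ (EFin \o v))%E //.
exact: integrableD.
Qed.

Lemma L1 (P : probability T R) {G : set (set T)} (sG : sub_sigma G) (W1 W2 g : T -> R) :
  P.-integrable setT (EFin \o W1) -> P.-integrable setT (EFin \o W2) ->
  (forall C, G C -> \int[P]_(x in C) (W1 x)%:E = \int[P]_(x in C) (W2 x)%:E)%E ->
  measurable_wrt G g ->
  P.-integrable setT (EFin \o (fun x => g x * W1 x)) ->
  P.-integrable setT (EFin \o (fun x => g x * W2 x)) ->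
  (\int[P]_x (g x * W1 x)%:E = \int[P]_x (g x * W2 x)%:E)%E.
Proof.
move=> i1 i2 HW mg ig1 ig2.
have mW1 : measurable_fun setT W1 by exact/measurable_EFinP/(measurable_int _ i1).
have mW2 : measurable_fun setT W2 by exact/measurable_EFinP/(measurable_int _ i2).
have mgT' := (mwrtP g sG).1 mg.
have mgT : measurable_fun setT g := mfun_T'T sG mgT'.
pose D1 := fun x => W1^\+ x + W2^\- x.
pose D2 := fun x => W2^\+ x + W1^\- x.
have eD x : D1 x - D2 x = W1 x - W2 x.
  rewrite /D1 /D2 -[in RHS](posneg W1 x) -[in RHS](posneg W2 x); ring.
have mD1 : measurable_fun setT D1.
  by apply: measurable_funD; [exact: measurable_funrpos|exact: measurable_funrneg].
have mD2 : measurable_fun setT D2.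
  by apply: measurable_funD; [exact: measurable_funrpos|exact: measurable_funrneg].
have D1bd x : `|D1 x| <= `|W1 x| + `|W2 x|.
  by rewrite (le_trans (ler_normD _ _)) // lerD // ?pos_le ?neg_le.
have D2bd x : `|D2 x| <= `|W1 x| + `|W2 x|.
  by rewrite (le_trans (ler_normD _ _)) // addrC lerD // ?pos_le ?neg_le.
have iD1 := int_dom P _ _ _ mD1 i1 i2 D1bd.
have iD2 := int_dom P _ _ _ mD2 i1 i2 D2bd.
have D10 x : 0 <= D1 x by rewrite addr_ge0.
have D20 x : 0 <= D2 x by rewrite addr_ge0.
have HD C : G C -> (\int[P]_(x in C) (D1 x)%:E = \int[P]_(x in C) (D2 x)%:E)%E.
  move=> GC; have mC := sG.2 _ GC.
  have iS u : P.-integrable setT (EFin \o u) -> P.-integrable C (EFin \o u).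
    by move=> iu; exact: integrableS iu.
  have := HW C GC; rewrite !EFinRint // ?iS // => -[h].
  congr EFin; apply/eqP; rewrite -subr_eq0 -RintegralB ?iS //.
  rewrite (@eq_Rintegral _ _ _ P C (fun x => W1 x - W2 x) (fun x => D1 x - D2 x)); last by move=> x _; exact: eD.
  by rewrite RintegralB ?iS // h subrr.
have prodbd (p : T -> R) (D : T -> R) : (forall x, `|p x| <= `|g x|) ->
    (forall x, `|D x| <= `|W1 x| + `|W2 x|) -> measurable_fun setT p ->
    measurable_fun setT D ->
    P.-integrable setT (EFin \o (fun x => p x * D x)).
  move=> pb Db mp mD; apply: (int_dom P _ _ _ _ ig1 ig2); first exact: measurable_funM.
  move=> x; rewrite !normrM -mulrDr ler_pM //.
have mgp := measurable_funrpos mgT.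
have mgn := measurable_funrneg mgT.
have ia := prodbd _ _ (pos_le g) D1bd mgp mD1.
have ib := prodbd _ _ (pos_le g) D2bd mgp mD2.
have ic := prodbd _ _ (neg_le g) D1bd mgn mD1.
have ie := prodbd _ _ (neg_le g) D2bd mgn mD2.
have Ep : (\int[P]_x (g^\+ x * D1 x) = \int[P]_x (g^\+ x * D2 x))%R.
  have := @L0 _ _ _ P G sG D1 D2 (EFin \o g^\+) D10 D20 mD1 mD2 HD.
  move=> /(_ ((measurable_EFinP _ _).2 (measurable_funrpos mgT')) (fun x => funrpos_ge0 _ _)).
  under eq_integral do rewrite -EFinM.
  under [X in _ = X -> _]eq_integral do rewrite -EFinM.
  by rewrite !EFinRint // => -[].
have En : (\int[P]_x (g^\- x * D1 x) = \int[P]_x (g^\- x * D2 x))%R.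
  have := @L0 _ _ _ P G sG D1 D2 (EFin \o g^\-) D10 D20 mD1 mD2 HD.
  move=> /(_ ((measurable_EFinP _ _).2 (measurable_funrneg mgT')) (fun x => funrneg_ge0 _ _)).
  under eq_integral do rewrite -EFinM.
  under [X in _ = X -> _]eq_integral do rewrite -EFinM.
  by rewrite !EFinRint // => -[].
have key x : g x * W1 x + g^\+ x * D2 x + g^\- x * D1 x =
             g x * W2 x + g^\+ x * D1 x + g^\- x * D2 x.
  have hW1 : W1 x = W2 x + D1 x - D2 x by rewrite -addrA eD; ring.
  rewrite hW1 -(posneg g x); ring.
have := @eq_Rintegral _ _ _ P setT _ _ (fun x _ => key x).
rewrite !RintegralD //; try by repeat apply: intD.
rewrite Ep En => h.
rewrite !EFinRint //; congr EFin.
by apply: (addIr (\int[P]_x (g^\- x * D2 x))%R); apply: (addIr (\int[P]_x (g^\+ x * D2 x))%R); lra.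
Qed.

End L1.


Section gen.
Context {dsp : measure_display} {T : measurableType dsp} {R : realType}.

Lemma mwrt_sub (G1 G2 : set (set T)) (f : T -> R) :
  G1 `<=` G2 -> measurable_wrt G1 f -> measurable_wrt G2 f.
Proof. by move=> G12 mf B mB; apply: G12; exact: mf. Qed.

Lemma mwrt_cst {G : set (set T)} (sG : sub_sigma G) (c : R) :
  measurable_wrt G (fun _ => c).
Proof.
move=> B mB; have [[G0 GC _] _] := sG.
have [Bc|Bc] := pselect (B c).
- rewrite (_ : _ @^-1` _ = setT); last by apply/seteqP; split.
  by rewrite -setC0 -setTD; exact: GC.
- by rewrite (_ : _ @^-1` _ = set0) //; apply/seteqP; split.
Qed.

Lemma int_indicR (P : probability T R) (B : set T) (f : T -> R) :
  (\int[P]_(x in B) (f x)%:E = \int[P]_x (f x * \1_B x)%:E)%E.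
Proof.
rewrite integral_mkcond; apply: eq_integral => x _.
by rewrite epatch_indic /= EFinM.
Qed.

Lemma ver_ae (P : probability T R) {G : set (set T)} (sG : sub_sigma G) (V Y1 Y2 : T -> R) :
  is_cond_exp P G V Y1 -> is_cond_exp P G V Y2 -> {ae P, forall x, Y1 x = Y2 x}.
Proof.
move=> [m1 i1 e1] [m2 i2 e2].
have h12 : {ae P, forall x, (Y1 x <= Y2 x)%R}.
  by apply: (cmp_ae P sG) => // C GC; rewrite e1 // e2.
have h21 : {ae P, forall x, (Y2 x <= Y1 x)%R}.
  by apply: (cmp_ae P sG) => // C GC; rewrite e1 // e2.
by apply: filterS2 h12 h21 => x a b; apply/eqP; rewrite eq_le a b.
Qed.

Lemma dyn_ext (P : probability T R) (U : set (set T)) (f1 f2 : T -> R) :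
  setI_closed U -> U `<=` measurable ->
  P.-integrable setT (EFin \o f1) -> P.-integrable setT (EFin \o f2) ->
  (\int[P]_(x in setT) (f1 x)%:E = \int[P]_(x in setT) (f2 x)%:E)%E ->
  (forall A, U A -> \int[P]_(x in A) (f1 x)%:E = \int[P]_(x in A) (f2 x)%:E)%E ->
  forall S, <<s U >> S -> (\int[P]_(x in S) (f1 x)%:E = \int[P]_(x in S) (f2 x)%:E)%E.
Proof.
move=> UI Um i1 i2 eT eU.
have sUm : <<s U >> `<=` measurable.
  by apply: smallest_sub => //; exact: sigma_algebra_measurable.
have := @dynkin_induction _ (g_sigma_algebraType U) U
  (fun S => \int[P]_(x in (S : set T)) (f1 x)%:E = \int[P]_(x in S) (f2 x)%:E)%E
  erefl UI eT eU.
apply.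
- move=> S mS eS.
  have mS' : measurable (S : set T) by exact: (sUm _ mS).
  have mCS : measurable (~` S : set T) by exact: measurableC.
  have iT (f : T -> R) : P.-integrable setT (EFin \o f) -> forall A : set T,
      measurable A -> P.-integrable A (EFin \o f).
    by move=> iF A mA; exact: integrableS iF.
  move: eT eS; rewrite !EFinRint //; try exact: iT.
  move=> -[eT] -[eS]; congr EFin.
  have dec (f : T -> R) : P.-integrable setT (EFin \o f) ->
      (\int[P]_(x in setT) f x = \int[P]_(x in S) f x + \int[P]_(x in ~` S) f x)%R.
    by move=> iF; rewrite -Rintegral_setU // ?setUCr // disj_set2E setICr.
  have d1 := dec _ i1; have d2 := dec _ i2.
  rewrite eT eS in d1; rewrite d2 in d1.
  by move/addrI: d1.
- move=> F mF tF eF.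
  have mF' k : measurable (F k : set T) by exact: (sUm _ (mF k)).
  have mU : measurable (\bigcup_k F k : set T) by exact: bigcupT_measurable.
  rewrite !integral_bigcup //; try exact: (integrableS measurableT mU (subsetT _)).
  congr (limn _); apply/funext => n; apply: eq_bigr => k _; exact: eF.
Qed.
End gen.


Section clamp.
Context {T : Type} {R : realType}.
Definition clamp (Y : T -> R) : T -> R := fun x => Y^\+ x - (fun y => Y^\+ y - 1)^\+ x.

Lemma clamp_bd (Y : T -> R) x : `|clamp Y x| <= 1.
Proof.
rewrite /clamp /funrpos /Num.max; case: ifPn => h1; case: ifPn => h2;
  rewrite ?ltNge in h1 h2 *; rewrite ?negbK in h1 h2;
  apply/ler_normlP; split; lra.
Qed.

Lemma clamp_id (Y : T -> R) x : 0 <= Y x <= 1 -> clamp Y x = Y x.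
Proof.
move=> /andP[a b].
rewrite /clamp /funrpos /Num.max; case: ifPn => h1; case: ifPn => h2;
  rewrite ?ltNge in h1 h2 *; rewrite ?negbK in h1 h2; lra.
Qed.
End clamp.

Section main.
Context {dsp : measure_display} {T : measurableType dsp} {R : realType}.
Variables (P : probability T R) (d : nat) (F : ('I_d -> nat) -> set (set T)).
Hypothesis Fsub : forall s, sub_sigma (F s).
Hypothesis F1 : forall s r, mleq s r -> F s `<=` F r.
Hypothesis F4 : forall s r, cond_indep P (F s) (F r) (F (mmin s r)).

Lemma unitv_le (i : 'I_d) a b : (a <= b)%N -> mleq (unitv i a) (unitv i b).
Proof. by move=> ab j; rewrite /unitv; case: (j == i). Qed.

Lemma mmin_unitv (i : 'I_d) (r : 'I_d -> nat) t :
  (r i <= t)%N -> mmin r (unitv i t) = unitv i (r i).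
Proof.
move=> rt; apply/funext => j; rewrite /mmin /unitv.
by case: eqP => [->|_]; [exact/minn_idPl|exact: minn0].
Qed.

Lemma sigT (G : set (set T)) : sub_sigma G -> G setT.
Proof. by move=> [[G0 GC _] _]; rewrite -setC0 -setTD; exact: GC. Qed.

Lemma int_bdd (f g : T -> R) : measurable_fun setT f ->
  P.-integrable setT (EFin \o g) -> (forall x, `|f x| <= 1) ->
  P.-integrable setT (EFin \o (fun x => f x * g x)).
Proof.
move=> mf ig fb; apply: (int_dom P _ g g) => //.
  apply: measurable_funM => //; exact/measurable_EFinP/(measurable_int _ ig).
move=> x; rewrite normrM (le_trans (ler_pM _ _ (fb x) (lexx _))) //.
by rewrite mul1r lerDl.
Qed.

Lemma int_indic (A : set T) : measurable A -> P.-integrable setT (EFin \o \1_A).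
Proof. by move=> mA; exact: (integrable_indic P mA). Qed.

Lemma claim1 (i : 'I_d) (t : nat) (r : 'I_d -> nat) (A : set T) :
  F r A -> (r i <= t)%N -> forall Y : T -> R,
  is_cond_exp P (F (unitv i (r i))) (\1_A) Y ->
  forall B, F (unitv i t) B ->
  (\int[P]_(x in B) (Y x)%:E = \int[P]_(x in B) (\1_A x)%:E)%E.
Proof.
move=> FA rt Y cY B FB.
have mm := mmin_unitv i r t rt.
have sK := Fsub (unitv i (r i)).
have mA : measurable A := (Fsub r).2 _ FA.
have mB : measurable B := (Fsub _).2 _ FB.
have [YA [YB [cA cB cAB]]] := F4 r (unitv i t) A B FA FB.
rewrite mm in cA cB cAB.
have [mYw iY eY] := cY. have [mAw iA eA] := cA. have [mBw iB eB] := cB.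
have [mABw iAB eAB] := cAB.
have mY : measurable_fun setT Y.
  by apply/measurable_EFinP; exact: (measurable_int _ iY).
have mYA : measurable_fun setT YA.
  by apply/measurable_EFinP; exact: (measurable_int _ iA).
transitivity (\int[P]_(x in B) (YA x)%:E)%E.
  apply: ae_eq_integral => //.
  - by apply/measurable_EFinP; exact: measurable_funTS.
  - by apply/measurable_EFinP; exact: measurable_funTS.
  - by apply: filterS (ver_ae P sK _ _ _ cY cA) => x /= ->.
rewrite int_indicR.
rewrite -(L1 P sK YB (\1_B) YA) //; last 2 first.
- exact: int_indic.
- apply: (int_dom P _ YA YA) => //; first exact: measurable_funM.
  move=> x; rewrite normrM indicE; case: (_ \in _).
  + by rewrite normr1 mulr1 lerDl.
  + by rewrite normr0 mulr0 addr_ge0.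
have := eAB setT (sigT _ sK).
rewrite /= => ->.
by rewrite !integral_indic // ?setIT //; exact: measurableI.
Qed.

Lemma int_bdd' (f g : T -> R) : measurable_fun setT f ->
  P.-integrable setT (EFin \o g) -> (forall x, `|f x| <= 1) ->
  P.-integrable setT (EFin \o (fun x => g x * f x)).
Proof.
move=> mf ig fb; rewrite (_ : (fun x => g x * f x) = (fun x => f x * g x)).
  exact: int_bdd.
by apply/funext => x; rewrite mulrC.
Qed.

Lemma core (i : 'I_d) (s t : nat) (Xt Z : T -> R) : (s <= t)%N ->
  measurable_wrt (F (unitv i t)) Xt -> P.-integrable setT (EFin \o Xt) ->
  is_cond_exp P (F (unitv i s)) Xt Z ->
  forall r A, (r i <= s)%N -> F r A ->
  (\int[P]_(x in A) (Z x)%:E = \int[P]_(x in A) (Xt x)%:E)%E.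
Proof.
move=> st mXt iXt [mZw iZ eZ] r A ri FA.
have rt := leq_trans ri st.
have sK := Fsub (unitv i (r i)).
have sH := Fsub (unitv i s).
have sT := Fsub (unitv i t).
have KH := F1 _ _ (unitv_le i _ _ ri).
have HT := F1 _ _ (unitv_le i _ _ st).
have mA : measurable A := (Fsub r).2 _ FA.
have [YA [YB [cA _ _]]] := F4 r (unitv i t) A setT FA (sigT _ sT).
rewrite (mmin_unitv i r t rt) in cA.
have [mAw iA eA] := cA.
have mYA' := (mwrtP YA sK).1 mAw.
have mYA : measurable_fun setT YA := mfun_T'T sK mYA'.
have ge0 : {ae P, forall x, 0 <= YA x}.
  apply: (cmp_ae P sK (fun _ => 0) YA) => //.
  - exact: mwrt_cst.
  - exact: (finite_measure_integrable_cst P 0 measurableT).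
  - move=> C KC; have mC := sK.2 _ KC.
    rewrite eA // integral_indic // integral0_eq //; exact: measure_ge0.
have le1 : {ae P, forall x, YA x <= 1}.
  apply: (cmp_ae P sK YA (fun _ => 1)) => //.
  - exact: mwrt_cst.
  - exact: (finite_measure_integrable_cst P 1 measurableT).
  - move=> C KC; have mC := sK.2 _ KC.
    rewrite eA // integral_indic // integral_cst // mul1e.
    by apply: le_measure; rewrite ?inE //; exact: measurableI.
pose W := clamp YA.
have mW' : measurable_fun [set: g_sigma_algebraType (F (unitv i (r i)))] W.
  apply: measurable_funB; first exact: measurable_funrpos.
  apply: measurable_funrpos; apply: measurable_funB => //.
  exact: measurable_funrpos.
have mWw : measurable_wrt (F (unitv i (r i))) W := (mwrtP W sK).2 mW'.
have mW : measurable_fun setT W := mfun_T'T sK mW'.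
have Wb : forall x, `|W x| <= 1 := clamp_bd YA.
have WYA : {ae P, forall x, W x = YA x}.
  by apply: filterS2 ge0 le1 => x a b; apply: clamp_id; rewrite a b.
have iW : P.-integrable setT (EFin \o W).
  have := int_bdd W (fun _ => 1) mW (finite_measure_integrable_cst P 1 measurableT) Wb.
  by rewrite (_ : (fun x => W x * 1) = W) //; apply/funext => x; rewrite mulr1.
have cW : is_cond_exp P (F (unitv i (r i))) (\1_A) W.
  split => // C KC; rewrite -eA //; have mC := sK.2 _ KC.
  apply: ae_eq_integral => //.
  - by apply/measurable_EFinP; exact: measurable_funTS.
  - by apply/measurable_EFinP; exact: measurable_funTS.
  - by apply: filterS WYA => x /= ->.
have c1 := claim1 i t r A FA rt W cW.
have mXtT : measurable_fun setT Xt := mfun_T'T sT ((mwrtP Xt sT).1 mXt).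
have mZT : measurable_fun setT Z := mfun_T'T sH ((mwrtP Z sH).1 mZw).
have mIA : measurable_fun setT (\1_A : T -> R) by exact: measurable_indic.
have IAb : forall x, `|(\1_A x : R)| <= 1.
  by move=> x; rewrite indicE; case: (_ \in _); rewrite ?normr1 ?normr0.
rewrite int_indicR [RHS]int_indicR.
transitivity (\int[P]_x (Z x * W x)%:E)%E.
  symmetry; apply: (L1 P sH W (\1_A) Z) => //.
  - exact: int_indic.
  - by move=> C HC; apply: c1; exact: HT.
  - exact: int_bdd'.
  - exact: int_bdd'.
transitivity (\int[P]_x (W x * Z x)%:E)%E.
  by apply: eq_integral => x _; rewrite mulrC.
transitivity (\int[P]_x (W x * Xt x)%:E)%E.
  symmetry; apply: (L1 P sH Xt Z W) => //.
  - by move=> C HC; rewrite eZ.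
  - exact: (mwrt_sub _ _ _ KH).
  - exact: int_bdd.
  - exact: int_bdd.
transitivity (\int[P]_x (Xt x * W x)%:E)%E.
  by apply: eq_integral => x _; rewrite mulrC.
apply: (L1 P sT W (\1_A) Xt) => //.
- exact: int_indic.
- exact: int_bdd'.
- exact: int_bdd'.
Qed.

End main.


Lemma sigI {dsp : measure_display} {T : measurableType dsp} (G : set (set T)) :
  sub_sigma G -> forall A B, G A -> G B -> G (A `&` B).
Proof.
move=> sG A B GA GB; apply: (mT'E sG _).1.
by apply: measurableI; apply: (mT'E sG _).2.
Qed.

Theorem proposition6p4 (dsp : measure_display) (T : measurableType dsp)
  (R : realType) (P : probability T R) (d : nat)
  (F : ('I_d -> nat) -> set (set T))
  (Pcomplete : measure_is_complete P)
  (Fsub : forall s, sub_sigma (F s))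
  (F1 : forall s r, mleq s r -> F s `<=` F r)
  (F2 : forall N, P.-negligible N -> F (fun _ => 0%N) N)
  (F4 : forall s r, cond_indep P (F s) (F r) (F (mmin s r))) :
  forall (i : 'I_d) (X : nat -> T -> R),
    supermartingale P (axisF F i) X -> supermartingale P (slabF F i) X.
Proof.
move=> i X [Xm Xi Xs].
have sub_slab s : F (unitv i s) `<=` slabF F i s.
  move=> B FB; apply: sub_gen_smallest; exists (unitv i s) => //.
  by rewrite /= /unitv eqxx.
have sG s : sub_sigma (slabF F i s).
  split; first exact: smallest_sigma_algebra.
  apply: smallest_sub; first exact: sigma_algebra_measurable.
  by move=> B [r _ FB]; exact: (Fsub r).2.
split.
- by move=> t B mB; apply: sub_slab; exact: Xm.
- exact: Xi.
- move=> s t st Y cY.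
  have [Z cZ] := cond_exp_exists P (Fsub (unitv i s)) (X t) (Xi t).
  have Zle := Xs s t st Z cZ.
  have [mZw iZ eZ] := cZ.
  have [mYw iY eY] := cY.
  have eG : forall C, slabF F i s C ->
      (\int[P]_(x in C) (Z x)%:E = \int[P]_(x in C) (X t x)%:E)%E.
    apply: dyn_ext => //.
    - move=> A B [r ri FA] [r' ri' FB].
      exists (fun j => maxn (r j) (r' j)); first by rewrite /= geq_max ri ri'.
      apply: sigI; first exact: Fsub.
      + by apply: (F1 r) => // j; exact: leq_maxl.
      + by apply: (F1 r') => // j; exact: leq_maxr.
    - by move=> B [r _ FB]; exact: (Fsub r).2.
    - by rewrite eZ //; exact: sigT.
    - move=> A [r ri FA].
      exact: (core P d F Fsub F1 F4 i s t (X t) Z st (Xm t) (Xi t) cZ r A ri FA).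
  apply: filterS2 (cmp_ae P (sG s) Y Z mYw (mwrt_sub _ _ _ (sub_slab s) mZw) iY iZ _) Zle.
    by move=> x; exact: le_trans.
  by move=> C GC; rewrite eY // eG.
Qed.
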